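(* Let $q\ge2$ be an even integer. The interpolated fusion ring $\mathcal{R}_q$ has rank $q+1$ and Frobenius–Perron dimension $q(q^2-1)$, its basis consists of $x_{1,1}$, $x_{q-1,c}$ ($1\le c\le q/2$), $x_{q,1}$, $x_{q+1,c}$ ($1\le c\le (q-2)/2$) with $\mathrm{FPdim}(x_{d,c})=d$, and its fusion rules are (all sums over $c_3$, resp. $c_2$, run over the allowed index range of the corresponding basis elements): $x_{q-1,c_1}x_{q-1,c_2}=\delta_{c_1,c_2}x_{1,1}+\sum_{c_3:\ c_1+c_2+c_3\notin\{q+1,\,2\max(c_1,c_2,c_3)\}}x_{q-1,c_3}+(1-\delta_{c_1,c_2})x_{q,1}+\sum_{c_3}x_{q+1,c_3}$; $x_{q-1,c_1}x_{q,1}=\sum_{c_2}(1-\delta_{c_1,c_2})x_{q-1,c_2}+x_{q,1}+\sum_{c_2}x_{q+1,c_2}$; $x_{q-1,c_1}x_{q+1,c_2}=\sum_{c_3}x_{q-1,c_3}+x_{q,1}+\sum_{c_3}x_{q+1,c_3}$; $x_{q,1}x_{q,1}=x_{1,1}+\sum_cx_{q-1,c}+x_{q,1}+\sum_cx_{q+1,c}$; $x_{q,1}x_{q+1,c_1}=\sum_{c_2}x_{q-1,c_2}+x_{q,1}+\sum_{c_2}(1+\delta_{c_1,c_2})x_{q+1,c_2}$; $x_{q+1,c_1}x_{q+1,c_2}=\delta_{c_1,c_2}x_{1,1}+\sum_{c_3}x_{q-1,c_3}+(1+\delta_{c_1,c_2})x_{q,1}+\sum_{c_3:\ c_1+c_2+c_3\notin\{q-1,\,2\max(c_1,c_2,c_3)\}}x_{q+1,c_3}+\sum_{c_3:\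 c_1+c_2+c_3\in\{q-1,\,2\max(c_1,c_2,c_3)\}}2x_{q+1,c_3}$; and $x_{1,1}$ is the unit; the remaining products follow by commutativity.
   Context: $\zeta_n=\exp(2\pi i/n)$. A fusion ring is a ring which is a free $\mathbb{Z}$-module with finite basis, nonnegative integer structure constants, a unit basis element, a duality on the basis and Frobenius reciprocity; $\mathrm{FPdim}$ is the unique ring homomorphism to $\mathbb{C}$ positive on the basis, and $\mathrm{FPdim}$ of the ring is $\sum_b\mathrm{FPdim}(b)^2$. For even $q\ge2$, $\mathcal{R}_q$ is the commutative fusion ring whose basis is the set of rows of the following formal table $(\lambda_{x,s})$ and whose structure constants are $N_{x,y}^z=\sum_s\lambda_{x,s}\lambda_{y,s}\overline{\lambda_{z,s}}/\mathfrak{c}_s$ with $\mathfrak{c}_s=\sum_x|\lambda_{x,s}|^2$. Columns: $C_0$; $C_1$; $A_k$ ($1\le k\le\frac{q-2}{2}$); $B_k$ ($1\le k\le\frac q2$). Rows (entries in that column order): $x_{1,1}$: $1,1,1,1$. $x_{q-1,c}$ ($1\le c\le \frac q2$): $q-1,\,-1,\,0,\,-\zeta_{q+1}^{kc}-\zeta_{q+1}^{-kc}$. $x_{q,1}$: $q,0,1,-1$. $x_{q+1,c}$ ($1\le c\le\frac{q-2}{2}$): $q+1,\,1,\,\zeta_{q-1}^{kc}+\zeta_{q-1}^{-kc},\,0$. (For $q$ a power of $2$ this is the character table of $\mathrm{PSL}(2,q)$.) *)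

(* Defs.v *)
From HB Require Import structures.
From mathcomp Require Import all_boot all_order all_algebra.
From mathcomp Require Import reals trigo.
From mathcomp Require Import complex.



Unset Printing Implicit Defensive.

Import Order.TTheory GRing.Theory Num.Theory.
Local Open Scope ring_scope.

(* Labels of the basis elements of R_q:
   X1 = x_{1,1}, Xm c = x_{q-1,c}, Xq = x_{q,1}, Xp c = x_{q+1,c}. *)
Inductive lab := X1 | Xm of nat | Xq | Xp of nat.

Definition lab_code (x : lab) : nat * nat :=
  match x with X1 => (0, 0) | Xm c => (1, c) | Xq => (2, 0) | Xp c => (3, c) end%N.
Definition lab_decode (p : nat * nat) : option lab :=
  match p with
  | (0, _) => Some X1 | (1, c) => Some (Xm c) | (2, _) => Some Xq
  | (3, c) => Some (Xp c) | _ => None end%N.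
Lemma lab_codeK : pcancel lab_code lab_decode. Proof. by case. Qed.
HB.instance Definition _ := Equality.copy lab (pcan_type lab_codeK).

(* Labels of the columns of the formal table: C_0, C_1, A_k, B_k. *)
Inductive col := C0 | C1 | A of nat | B of nat.

Definition basis (q : nat) : seq lab :=
  X1 :: [seq Xm c | c <- iota 1 q./2] ++ Xq :: [seq Xp c | c <- iota 1 (q - 2)./2].

Definition cols (q : nat) : seq col :=
  C0 :: C1 :: [seq A k | k <- iota 1 (q - 2)./2] ++ [seq B k | k <- iota 1 q./2].

Local Open Scope complex_scope.

Definition zeta (R : realType) (n : nat) : R[i] :=
  (cos (2 * pi / n%:R) +i* sin (2 * pi / n%:R)).

Local Close Scope complex_scope.

Definition lambda (R : realType) (q : nat) (x : lab) (s : col) : R[i] :=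
  match x, s with
  | X1, _ => 1
  | Xm _, C0 => (q - 1)%:R
  | Xm _, C1 => -1
  | Xm _, A _ => 0
  | Xm c, B k => - (zeta R q.+1 ^+ (k * c) + (zeta R q.+1) ^- (k * c))
  | Xq, C0 => q%:R
  | Xq, C1 => 0
  | Xq, A _ => 1
  | Xq, B _ => -1
  | Xp _, C0 => q.+1%:R
  | Xp _, C1 => 1
  | Xp c, A k => zeta R (q - 1) ^+ (k * c) + (zeta R (q - 1)) ^- (k * c)
  | Xp _, B _ => 0
  end.

Definition cnorm (R : realType) (q : nat) (s : col) : R[i] :=
  \sum_(x <- basis q) `|lambda R q x s| ^+ 2.

Definition fusN (R : realType) (q : nat) (x y z : lab) : R[i] :=
  \sum_(s <- cols q) lambda R q x s * lambda R q y s * (lambda R q z s)^* / cnorm R q s.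

Definition fpd (q : nat) (x : lab) : nat :=
  match x with X1 => 1 | Xm _ => q - 1 | Xq => q | Xp _ => q.+1 end%N.

(* f is a ring homomorphism R_q -> C (given on the basis, extended linearly)
   that is positive on the basis: the defining property of FPdim. *)
Definition isFPdim (R : realType) (q : nat) (f : lab -> R[i]) : Prop :=
  [/\ f X1 = 1,
      (forall x, x \in basis q -> 0 < f x) &
      (forall x y, x \in basis q -> y \in basis q ->
         f x * f y = \sum_(z <- basis q) fusN R q x y z * f z)].

(* Fusion rules as stated in the theorem (coefficient of z in x*y), for the
   products listed explicitly; the other products are obtained by commutativity. *)
Definition rule0 (q : nat) (x y z : lab) : nat :=
  match x, y with
  | X1, _ => (z == y)
  | Xm c1, Xm c2 =>
      match z with
      | X1 => (c1 == c2)
      | Xm c3 => (c1 + c2 + c3 \notin [:: q.+1; 2 * maxn c1 (maxn c2 c3)])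
      | Xq => (c1 != c2)
      | Xp _ => 1
      end
  | Xm c1, Xq =>
      match z with X1 => 0 | Xm c2 => (c1 != c2) | Xq => 1 | Xp _ => 1 end
  | Xm _, Xp _ =>
      match z with X1 => 0 | _ => 1 end
  | Xq, Xq => 1
  | Xq, Xp c1 =>
      match z with X1 => 0 | Xm _ => 1 | Xq => 1 | Xp c2 => 1 + (c1 == c2) end
  | Xp c1, Xp c2 =>
      match z with
      | X1 => (c1 == c2)
      | Xm _ => 1
      | Xq => 1 + (c1 == c2)
      | Xp c3 => if c1 + c2 + c3 \in [:: q - 1; 2 * maxn c1 (maxn c2 c3)] then 2 else 1
      end
  | _, _ => 0
  end%N.

Definition listed (x y : lab) : bool :=
  match x, y with
  | X1, _ => true
  | _, X1 => false
  | Xm _, _ | Xq, Xq | Xq, Xp _ | Xp _, Xp _ => true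
  | _, _ => false
  end.

Definition rule (q : nat) (x y z : lab) : nat :=
  if listed x y then rule0 q x y z else rule0 q y x z.

(* Main.v *)
Require Import Defs.
From HB Require Import structures.
From mathcomp Require Import all_boot all_order all_algebra.
From mathcomp Require Import reals trigo.
From mathcomp Require Import complex.
From mathcomp Require Import ring lra zify.
Import Order.TTheory GRing.Theory Num.Theory.
Local Open Scope ring_scope.

Section Z.
Variable R : realType.
Local Notation C := (R[i]).

Lemma zeta_pow (n m : nat) : (zeta R n) ^+ m =
  (cos (2 * pi / n%:R *+ m) +i* sin (2 * pi / n%:R *+ m))%C.
Proof.
rewrite /zeta; set t := 2 * pi / n%:R.
elim: m => [|m IH]; first by rewrite expr0 !mulr0n cos0 sin0.
rewrite exprSr IH mulrSr cosD sinD /=.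
congr (_ +i* _)%C; ring.
Qed.

Lemma zeta_conj n : zeta R n * (zeta R n)^* = 1.
Proof.
rewrite /zeta. set t := 2 * pi / n%:R.
simpc. apply/eqP; rewrite eq_complex /=; apply/andP; split; apply/eqP.
  by rewrite -(cos2Dsin2 t) !expr2.
ring.
Qed.

Lemma zeta_neq0 n : zeta R n != 0.
Proof.
apply/negP => /eqP h; have := zeta_conj n; rewrite h mul0r => /eqP.
by rewrite eq_sym oner_eq0.
Qed.

Lemma zeta_conjV n : (zeta R n)^* = (zeta R n)^-1.
Proof.
by rewrite -[LHS](mulKf (zeta_neq0 n)) zeta_conj mulr1.
Qed.

Lemma zeta_n n : (0 < n)%N -> zeta R n ^+ n = 1.
Proof.
move=> n0; rewrite zeta_pow.
have ->: 2 * pi / n%:R *+ n = pi *+ 2 :> R.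
  by rewrite -mulr_natr; field; rewrite pnatr_eq0 -lt0n.
by rewrite cos2pi sin2pi.
Qed.

Lemma zeta_m n m : (0 < m < n)%N -> zeta R n ^+ m != 1.
Proof.
move=> /andP[m0 mn]; rewrite zeta_pow.
pose y : R := pi * m%:R / n%:R.
have ->: 2 * pi / n%:R *+ m = y *+ 2.
  by rewrite /y -mulr_natl -[in RHS]mulr_natl; field; rewrite pnatr_eq0 -lt0n (ltn_trans m0 mn).
have hy : 0 < sin y.
  apply: sin_gt0_pi; apply/andP; split.
    rewrite /y divr_gt0 ?mulr_gt0 ?pi_gt0 ?ltr0n //; exact: (ltn_trans m0 mn).
  rewrite /y ltr_pdivrMr ?ltr0n ?(ltn_trans m0 mn) // ltr_pM2l ?pi_gt0 // ltr_nat //.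
apply/negP => /eqP h.
have [h2 _] : cos (y *+ 2) = 1 /\ sin (y *+ 2) = 0 by case: h.
move: h2; rewrite cos_mulr2n cos2sin2 => h2.
have h3 : sin y ^+ 2 = 0 by move: h2; rewrite mulr2n => h2; lra.
by move: h3 => /eqP; rewrite expf_eq0 /= (gt_eqF hy).
Qed.

Lemma zeta_prim n : (0 < n)%N -> n.-primitive_root (zeta R n).
Proof.
move=> n0; case: (prim_order_exists n0 (zeta_n n n0)) => m pm mn.
have m0 := prim_order_gt0 pm; have hm := prim_expr_order pm.
suff e : m = n by move: pm; rewrite e.
apply/eqP; rewrite eqn_leq dvdn_leq // leqNgt; apply/negP => lt.
by move: (zeta_m n m); rewrite m0 lt hm eqxx => /(_ isT).
Qed.

Lemma zeta_int_eq1 n (s : int) : (0 < n)%N ->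
  (zeta R n ^ s == 1) = ((n%:Z) %| s)%Z.
Proof.
move=> n0; rewrite dvdzE; case: s => m /=.
  by rewrite -(prim_order_dvd (zeta_prim n n0)).
by rewrite invr_eq1 -(prim_order_dvd (zeta_prim n n0)).
Qed.

Definition G (u : C) (s : int) := u ^ s + u ^ (- s).

Lemma G_nat u (c : nat) : G u c = u ^+ c + (u ^+ c)^-1.
Proof. by rewrite /G exprnN. Qed.

Lemma G3 u (a b c : int) : u != 0 ->
  G u a * G u b * G u c = G u (a + b + c) + G u (a + b - c) + G u (a - b + c) + G u (- a + b + c).
Proof.
move=> u0; rewrite /G !opprD !opprK !expfzDr //; ring.
Qed.

Lemma G2 u (a b : int) : u != 0 ->
  G u a * G u b = G u (a + b) + G u (a - b).
Proof.
move=> u0; rewrite /G !opprD !opprK !expfzDr //; ring.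
Qed.

Lemma G_sym (z : C) (k c : nat) : G (z ^+ k) c = G (z ^+ c) k.
Proof. by rewrite !G_nat -!exprM mulnC. Qed.

Lemma sym_sum (F : nat -> C) h :
  \sum_(k <- iota 1 h) (F k + F (h.*2.+1 - k)%N) = \sum_(k <- iota 1 h.*2) F k.
Proof.
elim: h F => [|h IH] F; first by rewrite !big_nil.
have e1 : forall m n, iota m.+1 n = map (addn 1) (iota m n).
  by move=> m n; rewrite -iotaDl.
have -> : iota 1 h.+1 = 1%N :: iota 2 h by [].
rewrite big_cons (e1 1%N h) big_map.
have -> : iota 1 h.+1.*2 = 1%N :: iota 2 (h.*2 + 1) by rewrite doubleS addn1.
rewrite big_cons (e1 1%N (h.*2 + 1)%N) big_map iotaD big_cat big_seq1 /=.
rewrite (eq_big_seq (fun k => F (1 + k)%N + F (1 + (h.*2.+1 - k))%N)); last first.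
  move=> k; rewrite mem_iota => /andP[_ hk]; congr (_ + F _); lia.
rewrite (IH (fun k => F (1 + k)%N)).
have -> : (h.+1.*2.+1 - 1 = 1 + (1 + h.*2))%N by rewrite doubleS; lia.
ring.
Qed.

Lemma geom (w : C) n : w ^+ n = 1 ->
  \sum_(k < n) w ^+ k = if w == 1 then n%:R else 0.
Proof.
move=> wn; case: eqP => [->|ne].
  by under eq_bigr do rewrite expr1n; rewrite sumr_const card_ord.
have := subrX1 w n; rewrite wn subrr => /esym /eqP.
rewrite mulf_eq0 subr_eq0 => /orP[/eqP//|/eqP//].
Qed.

Lemma sumG h (s : int) :
  \sum_(k <- iota 1 h) G (zeta R h.*2.+1 ^+ k) s =
  (if ((h.*2.+1)%:Z %| s)%Z then (h.*2.+1)%:R else 0) - 1.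
Proof.
set n := h.*2.+1; set z := zeta R n; set w := z ^ s.
have z0 : z != 0 := zeta_neq0 n.
have wn : w ^+ n = 1.
  by rewrite /w exprnP exprz_exp mulrC -exprz_exp -exprnP zeta_n // exp1rz.
have w0 : w \is a GRing.unit by rewrite unitfE /w expfz_neq0.
rewrite (eq_big_seq (fun k => w ^+ k + w ^+ (n - k)%N)); last first.
  move=> k; rewrite mem_iota => /andP[_ hk].
  have hkn : (k <= n)%N by rewrite /n; lia.
  rewrite /G (exprB hkn w0) wn div1r.
  rewrite (exprnP z k) !exprz_exp mulrN -invr_expz.
  by rewrite /w (exprnP (z ^ s) k) exprz_exp [(s * _)%R]mulrC.
transitivity (\sum_(k <- iota 1 h.*2) w ^+ k); first exact: (sym_sum (fun k => w ^+ k) h).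
have -> : \sum_(k <- iota 1 h.*2) w ^+ k = \sum_(k < n) w ^+ k - 1.
  rewrite -(big_mkord xpredT) /index_iota subn0 /n [iota 0 _]/= big_cons expr0.
  ring.
by rewrite geom // zeta_int_eq1.
Qed.
Lemma dvd_lt2 n m : (0 < n)%N -> (m < 2 * n)%N -> (n %| m)%N = (m == 0)%N || (m == n).
Proof.
move=> n0 mn; apply/idP/idP.
  move/dvdnP=> [k ek]; rewrite ek in mn *.
  have : (k < 2)%N by nia.
  by case: k {ek mn} => [|[|k]] //; rewrite ?mul0n ?mul1n eqxx ?orbT.
by case/orP=> /eqP ->; rewrite ?dvdn0 ?dvdnn.
Qed.

Lemma cnt_dvd h (a b c : nat) : (a <= h)%N -> (b <= h)%N -> (c <= h)%N ->
  [/\ ((h.*2.+1)%:Z %| a%:Z + b%:Z + c%:Z)%Z = (a + b + c == 0)%N || (a + b + c == h.*2.+1)%N,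
      ((h.*2.+1)%:Z %| a%:Z + b%:Z - c%:Z)%Z = (a + b == c)%N,
      ((h.*2.+1)%:Z %| a%:Z - b%:Z + c%:Z)%Z = (a + c == b)%N &
      ((h.*2.+1)%:Z %| - a%:Z + b%:Z + c%:Z)%Z = (b + c == a)%N].
Proof.
move=> ha hb hc; rewrite !dvdzE.
have n0 : (0 < h.*2.+1)%N by [].
split.
- have -> : absz (a%:Z + b%:Z + c%:Z) = (a + b + c)%N by lia.
  rewrite dvd_lt2 //; lia.
- rewrite dvd_lt2 //; last by lia.
  apply/idP/idP; [case/orP => /eqP h1; apply/eqP; lia | move/eqP=> h1; apply/orP; left; apply/eqP; lia].
- rewrite dvd_lt2 //; last by lia.
  apply/idP/idP; [case/orP => /eqP h1; apply/eqP; lia | move/eqP=> h1; apply/orP; left; apply/eqP; lia].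
- rewrite dvd_lt2 //; last by lia.
  apply/idP/idP; [case/orP => /eqP h1; apply/eqP; lia | move/eqP=> h1; apply/orP; left; apply/eqP; lia].
Qed.

Lemma sum_iota_const (x : C) h : \sum_(c <- iota 1 h) x = x *+ h.
Proof. by have := sumr_const_nat h.+1 1 x; rewrite /index_iota subSS subn0 => ->. Qed.

Section Main.
Variables (q : nat) (hq : (2 <= q)%N) (hev : ~~ odd q).
Local Notation h := (q./2).
Local Notation lam := (lambda R q).

Lemma hq2 : q = h.*2. Proof. by rewrite even_halfK. Qed.
Lemma h1 : (1 <= h)%N. Proof. have := hq2; lia. Qed.
Lemma hqA : ((q - 2)./2 = h - 1)%N. Proof. by rewrite {1}hq2 -(doubleB h 1) doubleK. Qed.

Lemma sum_basis (F : lab -> C) : \sum_(x <- basis q) F x =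
  F X1 + \sum_(c <- iota 1 h) F (Xm c) + F Xq + \sum_(c <- iota 1 (q - 2)./2) F (Xp c).
Proof. by rewrite /basis big_cons big_cat big_cons !big_map !addrA. Qed.

Lemma sum_cols (F : Defs.col -> C) : \sum_(s <- cols q) F s =
  F C0 + F C1 + \sum_(k <- iota 1 (q - 2)./2) F (A k) + \sum_(k <- iota 1 h) F (B k).
Proof. by rewrite /cols !big_cons big_cat !big_map !addrA. Qed.

Definition pL (x : lab) : nat := match x with Xm c | Xp c => c | _ => 0%N end.
Definition aL (x : lab) : C := match x with X1 => 2^-1 | Xm _ => 0 | Xq => 2^-1 | Xp _ => 1 end.
Definition bL (x : lab) : C := match x with X1 => 2^-1 | Xm _ => -1 | Xq => -(2^-1) | Xp _ => 0 end.

Lemma G0 u : G u 0 = 2.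
Proof. by rewrite /G oppr0 expr0z. Qed.

Lemma two_neq0 : (2 : C) != 0.
Proof. by rewrite pnatr_eq0. Qed.

Lemma lamB x k : lam x (B k) = bL x * G (zeta R q.+1 ^+ k) (pL x).
Proof.
have h2 := two_neq0.
case: x => [|c||c] /=; rewrite ?G0 ?G_nat -?exprM; try field; rewrite ?mul0r //.
all: by rewrite expf_neq0 // zeta_neq0.
Qed.

Lemma lamA x k : lam x (A k) = aL x * G (zeta R (q - 1) ^+ k) (pL x).
Proof.
have h2 := two_neq0.
case: x => [|c||c] /=; rewrite ?G0 ?G_nat -?exprM; try field; rewrite ?mul0r ?mul1r //.
all: by rewrite expf_neq0 // zeta_neq0.
Qed.

Lemma conj_zpow n m : ((zeta R n) ^+ m)^* = (zeta R n ^+ m)^-1.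
Proof. by rewrite rmorphXn /= zeta_conjV exprVn. Qed.

Lemma lam_conj x s : (lam x s)^* = lam x s.
Proof.
case: x; case: s => * /=; rewrite ?rmorph1 ?rmorphN1 ?rmorph0 ?conjC_nat //;
  rewrite ?rmorphN ?rmorphD /= fmorphV /= !conj_zpow invrK addrC //.
Qed.

Lemma hB : (h.*2.+1 = q.+1)%N. Proof. by rewrite -hq2. Qed.
Lemma hA' : (((q - 2)./2).*2.+1 = q - 1)%N. Proof. rewrite hqA; have := hq2; have := h1; lia. Qed.

Lemma sumGB (s : int) : \sum_(k <- iota 1 h) G (zeta R q.+1 ^+ k) s =
  (if ((q.+1)%:Z %| s)%Z then (q.+1)%:R else 0) - 1.
Proof. by have := sumG h s; rewrite hB. Qed.

Lemma sumGA (s : int) : \sum_(k <- iota 1 (q - 2)./2) G (zeta R (q - 1) ^+ k) s =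
  (if ((q - 1)%:Z %| s)%Z then (q - 1)%:R else 0) - 1.
Proof. by have := sumG (q - 2)./2 s; rewrite hA'. Qed.

Lemma ndvd n (s : int) : (0 < s)%R -> (s < n%:Z)%R -> ((n%:Z %| s)%Z = false).
Proof.
move=> s0 sn; rewrite dvdzE; apply/negbTE/negP => /dvdn_leq.
have : (0 < absz s)%N by lia.
move=> hs /(_ hs); lia.
Qed.

Lemma cnormE s : cnorm R q s = \sum_(x <- basis q) lam x s * lam x s.
Proof. by apply: eq_bigr => x _; rewrite normCK lam_conj. Qed.

Lemma qR : (q%:R : C) = 2 * h%:R.
Proof. by rewrite {1}hq2 -mul2n natrM. Qed.

Lemma qm1R : ((q - 1)%:R : C) = q%:R - 1.
Proof. by rewrite natrB //; apply: ltnW. Qed.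

Lemma hm1R : ((h - 1)%:R : C) = h%:R - 1.
Proof. by rewrite natrB // h1. Qed.

Lemma mulrn_hm1 (x : C) : x *+ (h - 1) = x * (h%:R - 1).
Proof. by rewrite -[LHS]mulr_natr natrB // h1. Qed.

Lemma cnorm_C0 : cnorm R q C0 = q%:R * (q%:R ^+ 2 - 1).
Proof.
rewrite cnormE sum_basis /= !sum_iota_const hqA mulrn_hm1 qm1R -natr1 qR.
ring.
Qed.

Lemma cnorm_C1 : cnorm R q C1 = q%:R.
Proof.
rewrite cnormE sum_basis /= !sum_iota_const hqA mulrn_hm1 qR.
ring.
Qed.

Lemma cnorm_A k : (1 <= k <= (q - 2)./2)%N -> cnorm R q (A k) = (q - 1)%:R.
Proof.
move=> hk.
rewrite cnormE sum_basis.
under [X in _ + X = _]eq_bigr do rewrite lamA /= mul1r G_sym G2 ?expf_neq0 ?zeta_neq0 // subrr G0.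
rewrite big_split /= sumGA ndvd; last first.
- rewrite -PoszD ltz_nat; move: hk; rewrite hqA; have := hq2; have := h1; lia.
- rewrite -PoszD ltz_nat; lia.
rewrite !sum_iota_const hqA mulrn_hm1 qm1R qR mulr0 /=.
ring.
Qed.

Lemma cnorm_B k : (1 <= k <= h)%N -> cnorm R q (B k) = (q.+1)%:R.
Proof.
move=> hk.
rewrite cnormE sum_basis.
under [X in _ + X + _ + _ = _]eq_bigr do rewrite lamB /= !mulN1r mulrNN G_sym G2 ?expf_neq0 ?zeta_neq0 // subrr G0.
rewrite big_split /= sumGB ndvd; last first.
- rewrite -PoszD ltz_nat; have := hq2; lia.
- rewrite -PoszD ltz_nat; lia.
rewrite !sum_iota_const hqA mulrn_hm1 mulr0 /= (_ : q.+1%:R = q%:R + 1 :> C); last by rewrite natr1.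
rewrite qR.
ring.
Qed.

Definition TB x y z := \sum_(k <- iota 1 h)
  G (zeta R q.+1 ^+ k) (pL x) * G (zeta R q.+1 ^+ k) (pL y) * G (zeta R q.+1 ^+ k) (pL z).
Definition TA x y z := \sum_(k <- iota 1 (q - 2)./2)
  G (zeta R (q - 1) ^+ k) (pL x) * G (zeta R (q - 1) ^+ k) (pL y) * G (zeta R (q - 1) ^+ k) (pL z).

Lemma fusN_formula0 x y z : fusN R q x y z =
  lam x C0 * lam y C0 * lam z C0 / (q%:R * (q%:R ^+ 2 - 1)) +
  lam x C1 * lam y C1 * lam z C1 / q%:R +
  aL x * aL y * aL z * TA x y z / (q - 1)%:R +
  bL x * bL y * bL z * TB x y z / (q.+1)%:R.
Proof.
rewrite /fusN sum_cols ?lam_conj cnorm_C0 cnorm_C1.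
congr (_ + _ + _ + _).
- transitivity (\sum_(k <- iota 1 (q - 2)./2) aL x * aL y * aL z / (q - 1)%:R *
   (G (zeta R (q - 1) ^+ k) (pL x) * G (zeta R (q - 1) ^+ k) (pL y) * G (zeta R (q - 1) ^+ k) (pL z))).
    apply: eq_big_seq => k; rewrite mem_iota => hk; rewrite ?lam_conj !lamA cnorm_A; first ring.
    by move: hk; rewrite /= add1n ltnS.
  rewrite -mulr_sumr /TA; ring.
- transitivity (\sum_(k <- iota 1 h) bL x * bL y * bL z / (q.+1)%:R *
   (G (zeta R q.+1 ^+ k) (pL x) * G (zeta R q.+1 ^+ k) (pL y) * G (zeta R q.+1 ^+ k) (pL z))).
    apply: eq_big_seq => k; rewrite mem_iota => hk; rewrite ?lam_conj !lamB cnorm_B; first ring.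
    by move: hk; rewrite /= add1n ltnS.
  rewrite -mulr_sumr /TB; ring.
Qed.

Definition cb n a b c : nat :=
  ((a + b + c == 0) || (a + b + c == n))%N + (a + b == c)%N + (a + c == b)%N + (b + c == a)%N.

Lemma ifE (b : bool) (r : C) : (if b then r else 0) = (b : nat)%:R * r.
Proof. by case: b; rewrite ?mul1r ?mul0r. Qed.

Lemma TB_eval x y z : (pL x <= h)%N -> (pL y <= h)%N -> (pL z <= h)%N ->
  TB x y z = (q.+1)%:R * (cb q.+1 (pL x) (pL y) (pL z))%:R - 4.
Proof.
move=> hx hy hz; rewrite /TB.
under eq_bigr do rewrite G3 ?expf_neq0 ?zeta_neq0 //.
rewrite big_split big_split big_split /= !sumGB.
have [e1 e2 e3 e4] := @cnt_dvd _ _ _ _ hx hy hz; rewrite hB in e1 e2 e3 e4.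
rewrite e1 e2 e3 e4 /cb !ifE !natrD; ring.
Qed.

Lemma TA_eval x y z : (pL x <= (q - 2)./2)%N -> (pL y <= (q - 2)./2)%N -> (pL z <= (q - 2)./2)%N ->
  TA x y z = (q - 1)%:R * (cb (q - 1)%N (pL x) (pL y) (pL z))%:R - 4.
Proof.
move=> hx hy hz; rewrite /TA.
under eq_bigr do rewrite G3 ?expf_neq0 ?zeta_neq0 //.
rewrite big_split big_split big_split /= !sumGA.
have [e1 e2 e3 e4] := @cnt_dvd _ _ _ _ hx hy hz; rewrite hA' in e1 e2 e3 e4.
rewrite e1 e2 e3 e4 /cb !ifE !natrD; ring.
Qed.

Lemma mem_basis x : x \in basis q = match x with
  | X1 => true | Xm c => (1 <= c <= h)%N | Xq => true | Xp c => (1 <= c <= (q - 2)./2)%N end.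
Proof.
rewrite /basis in_cons mem_cat in_cons.
have iXm : injective Xm by move=> a b [].
have iXp : injective Xp by move=> a b [].
case: x => [|c||c] /=; rewrite ?eqxx ?orbT //.
- have -> : (Xm c \in [seq Xp i | i <- iota 1 (q - 2)./2]) = false by apply/mapP => [[]].
  rewrite orbF (mem_map iXm) mem_iota; lia.
- have -> : (Xp c \in [seq Xm i | i <- iota 1 h]) = false by apply/mapP => [[]].
  rewrite (mem_map iXp) mem_iota; lia.
Qed.

Definition dL x : C := match x with X1 => 1 | Xm _ => q%:R - 1 | Xq => q%:R | Xp _ => q%:R + 1 end.
Definition eL x : C := match x with X1 => 1 | Xm _ => -1 | Xq => 0 | Xp _ => 1 end.

Lemma lamC0 x : lam x C0 = dL x.
Proof. by case: x => * /=; rewrite ?qm1R ?natr1. Qed.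

Lemma lamC1 x : lam x C1 = eL x.
Proof. by case: x. Qed.

Lemma Hp w : w \in basis q -> aL w = 0 \/ (pL w <= (q - 2)./2)%N.
Proof. rewrite mem_basis; case: w => [||| c] /=; auto => /andP[_ ->]; auto. Qed.

Lemma Hph w : w \in basis q -> (pL w <= h)%N.
Proof. rewrite mem_basis hqA; case: w => [|c||c] //= /andP[_]; lia. Qed.

Lemma fus_formula x y z : x \in basis q -> y \in basis q -> z \in basis q ->
  fusN R q x y z =
  dL x * dL y * dL z / (q%:R * (q%:R ^+ 2 - 1)) +
  eL x * eL y * eL z / q%:R +
  aL x * aL y * aL z * ((q%:R - 1) * (cb (q - 1)%N (pL x) (pL y) (pL z))%:R - 4) / (q%:R - 1) +
  bL x * bL y * bL z * ((q%:R + 1) * (cb q.+1 (pL x) (pL y) (pL z))%:R - 4) / (q%:R + 1).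
Proof.
move=> hx hy hz.
rewrite fusN_formula0 TB_eval ?Hph // !lamC0 !lamC1 -natr1 -qm1R.
congr (_ + _ + _ + _).
suff -> : aL x * aL y * aL z * TA x y z = aL x * aL y * aL z *
   ((q - 1)%:R * (cb (q - 1)%N (pL x) (pL y) (pL z))%:R - 4) by [].
case: (Hp _ hx) => [->|px]; first by rewrite !mul0r.
case: (Hp _ hy) => [->|py]; first by rewrite ?(mul0r, mulr0).
case: (Hp _ hz) => [->|pz]; first by rewrite ?(mul0r, mulr0).
by rewrite TA_eval.
Qed.

Lemma Q0 : (q%:R : C) != 0. Proof. by rewrite pnatr_eq0; lia. Qed.
Lemma Qm1 : (q%:R - 1 : C) != 0. Proof. by rewrite -qm1R pnatr_eq0; lia. Qed.
Lemma Qp1 : (q%:R + 1 : C) != 0. Proof. by rewrite natr1 pnatr_eq0. Qed.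
Lemma Qsq : (q%:R ^+ 2 - 1 : C) != 0.
Proof. have -> : (q%:R ^+ 2 - 1 : C) = (q%:R - 1) * (q%:R + 1) by ring.
by rewrite mulf_neq0 ?Qm1 ?Qp1. Qed.

Lemma maxE (a b c : nat) : (a + b + c == 2 * maxn a (maxn b c)) = [|| a + b == c, a + c == b | b + c == a].
Proof.
apply/idP/idP.
- move/eqP=> H; case: (leqP a (maxn b c)) => H1; case: (leqP b c) => H2;
  apply/orP; lia.
- lia.
Qed.

Ltac simpb := repeat match goal with |- context [(?a == ?b :> nat)] =>
   first [ rewrite (_ : (a == b) = false); last by apply/eqP; lia
         | rewrite (_ : (a == b) = true); last by apply/eqP; lia ] end.

Ltac destr := repeat match goal with |- context [(?a == ?b)%N] => case: (@eqP _ a b) => ? end.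

Lemma labE1 (a b : nat) : (X1 == X1) = true. Proof. by []. Qed.
Lemma labE2 (a b : nat) : (X1 == (Xm b)) = false. Proof. by []. Qed.
Lemma labE3 (a b : nat) : (X1 == Xq) = false. Proof. by []. Qed.
Lemma labE4 (a b : nat) : (X1 == (Xp b)) = false. Proof. by []. Qed.
Lemma labE5 (a b : nat) : ((Xm a) == X1) = false. Proof. by []. Qed.
Lemma labE6 (a b : nat) : ((Xm a) == (Xm b)) = (a == b). Proof. by []. Qed.
Lemma labE7 (a b : nat) : ((Xm a) == Xq) = false. Proof. by []. Qed.
Lemma labE8 (a b : nat) : ((Xm a) == (Xp b)) = false. Proof. by []. Qed.
Lemma labE9 (a b : nat) : (Xq == X1) = false. Proof. by []. Qed.
Lemma labE10 (a b : nat) : (Xq == (Xm b)) = false. Proof. by []. Qed.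
Lemma labE11 (a b : nat) : (Xq == Xq) = true. Proof. by []. Qed.
Lemma labE12 (a b : nat) : (Xq == (Xp b)) = false. Proof. by []. Qed.
Lemma labE13 (a b : nat) : ((Xp a) == X1) = false. Proof. by []. Qed.
Lemma labE14 (a b : nat) : ((Xp a) == (Xm b)) = false. Proof. by []. Qed.
Lemma labE15 (a b : nat) : ((Xp a) == Xq) = false. Proof. by []. Qed.
Lemma labE16 (a b : nat) : ((Xp a) == (Xp b)) = (a == b). Proof. by []. Qed.

Lemma fus_listed x y z : x \in basis q -> y \in basis q -> z \in basis q -> listed x y ->
  fusN R q x y z = (rule0 q x y z)%:R.
Proof.
move=> hx hy hz hl; rewrite fus_formula //.
move: hx hy hz hl; rewrite !mem_basis hqA.
have E := hq2.
have q0 := Q0; have q1 := Qm1; have q2 := Qp1; have q3 := Qsq.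
case: x => [|c1||c1]; case: y => [|c2||c2]; case: z => [|c3||c3] => //= hx hy hz _;
  rewrite /cb ?inE ?(mul0r, mulr0, add0r, addr0);
  rewrite ?(labE1, labE2, labE3, labE4, labE5, labE6, labE7, labE8, labE9, labE10, labE11, labE12, labE13, labE14, labE15, labE16);
  rewrite ?maxE; simpb;
  destr; rewrite /=; try (exfalso; lia); field; rewrite ?q0 ?q1 ?q2 ?q3 //.
Qed.


Lemma fusN_sym x y z : fusN R q x y z = fusN R q y x z.
Proof. by apply: eq_bigr => s _; rewrite [lam x s * _]mulrC. Qed.

Lemma listed_sym x y : ~~ listed x y -> listed y x.
Proof. by case: x; case: y. Qed.

Lemma fus_rule x y z : x \in basis q -> y \in basis q -> z \in basis q ->
  fusN R q x y z = (rule q x y z)%:R.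
Proof.
move=> hx hy hz; rewrite /rule; case: ifP => hl; first exact: fus_listed.
by rewrite fusN_sym fus_listed // listed_sym // hl.
Qed.

Lemma size_basis : size (basis q) = q.+1.
Proof. rewrite /basis /= size_cat /= !size_map !size_iota hqA; have := hq2; have := h1; lia. Qed.

Lemma uniq_basis : uniq (basis q).
Proof.
have iXm : injective Xm by move=> a b [].
have iXp : injective Xp by move=> a b [].
rewrite /basis cons_uniq mem_cat in_cons !negb_or; apply/andP; split.
- apply/andP; split; [|apply/andP; split] => //; by apply/mapP => [[]].
- rewrite cat_uniq (map_inj_uniq iXm) iota_uniq /= (map_inj_uniq iXp) iota_uniq andbT.
  rewrite negb_or; apply/andP; split; [apply/andP; split|].
  - by apply/mapP => [[]].
  - by apply/hasPn => w /mapP[c _ ->]; apply/mapP => [[]].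
  - by apply/mapP => [[]].
Qed.

Lemma sum_iota_nat (k n m : nat) : (\sum_(c <- iota m n) k = n * k)%N.
Proof. by elim: n m => [|n IH] m; rewrite ?big_nil // big_cons IH mulSn. Qed.

Lemma sum_fpd : (\sum_(x <- basis q) (fpd q x) ^ 2 = q * (q ^ 2 - 1))%N.
Proof.
rewrite /basis big_cons big_cat big_cons !big_map.
rewrite (sum_iota_nat ((q - 1) ^ 2)) (sum_iota_nat (q.+1 ^ 2)) hqA.
have := hq2; have := h1; move: (h) => k; case: k => [|k] // _ E.
have e1 : (q - 1 = 2 * k + 1)%N by lia.
have e2 : (k.+1 - 1 = k)%N by lia.
have e3 : (q.+1 = 2 * k + 3)%N by lia.
have e4 : (q ^ 2 - 1 = 4 * k * k + 8 * k + 3)%N by rewrite E -mul2n !expnS expn0; lia.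
have e5 : (q = 2 * k + 2)%N by lia.
rewrite [fpd q X1]/= [fpd q Xq]/= e4 e1 e2 e3 e5 !expnS !expn0.
rewrite -![ssrnat_addn__canonical__Monoid_Law _ _]/(addn _ _). nia.
Qed.

Lemma colE s : \sum_(z <- basis q) (lam z s)^* * lam z C0 = \sum_(z <- basis q) lam z s * lam z C0.
Proof. by apply: eq_bigr => z _; rewrite lam_conj. Qed.

Lemma col0_C1 : \sum_(z <- basis q) (lam z C1)^* * lam z C0 = 0.
Proof.
rewrite colE sum_basis /= !sum_iota_const hqA mulrn_hm1 qm1R.
rewrite (_ : q.+1%:R = q%:R + 1 :> C); last by rewrite natr1.
rewrite qR; ring.
Qed.

Lemma col0_A k : (1 <= k <= (q - 2)./2)%N -> \sum_(z <- basis q) (lam z (A k))^* * lam z C0 = 0.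
Proof.
move=> hk; rewrite colE sum_basis.
rewrite big1; last by move=> c _; rewrite /= mul0r.
under [X in _ + X = _]eq_bigr do rewrite lamA /= mul1r G_sym.
rewrite -mulr_suml sumGA ndvd; last first.
- rewrite ltz_nat; move: hk; rewrite hqA; have := hq2; have := h1; lia.
- rewrite ltz_nat; lia.
rewrite /= (_ : q.+1%:R = q%:R + 1 :> C); last by rewrite natr1.
ring.
Qed.

Lemma col0_B k : (1 <= k <= h)%N -> \sum_(z <- basis q) (lam z (B k))^* * lam z C0 = 0.
Proof.
move=> hk; rewrite colE sum_basis.
rewrite [X in _ + X = _]big1; last by move=> c _; rewrite /= mul0r.
under [X in _ + X + _ + _ = _]eq_bigr do rewrite lamB /= mulN1r G_sym mulNr.
rewrite sumrN -mulr_suml sumGB ndvd; last first.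
- rewrite ltz_nat; have := hq2; lia.
- rewrite ltz_nat; lia.
rewrite /= qm1R; ring.
Qed.

Lemma fpdE z : (fpd q z)%:R = lam z C0 :> C.
Proof. by case: z. Qed.

Lemma c0_neq0 : cnorm R q C0 != 0.
Proof. by rewrite cnorm_C0 mulf_neq0 ?Q0 ?Qsq. Qed.

Lemma fpd_mul x y : x \in basis q -> y \in basis q ->
  (fpd q x)%:R * (fpd q y)%:R = \sum_(z <- basis q) fusN R q x y z * (fpd q z)%:R :> C.
Proof.
move=> hx hy.
under eq_bigr do rewrite fpdE /fusN mulr_suml.
rewrite exchange_big /= sum_cols.
have H s : \sum_(i <- basis q) lam x s * lam y s * (lam i s)^* / cnorm R q s * lam i C0 =
   lam x s * lam y s / cnorm R q s * \sum_(i <- basis q) (lam i s)^* * lam i C0.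
  rewrite mulr_sumr; apply: eq_bigr => i _; ring.
rewrite !H col0_C1.
have -> : \sum_(i <- basis q) (lam i C0)^* * lam i C0 = cnorm R q C0.
  by apply: eq_bigr => i _; rewrite normCKC.
rewrite [\sum_(k <- iota 1 (q - 2)./2) _]big1_seq; last first.
  by move=> k /andP[_]; rewrite mem_iota add1n ltnS => hk; rewrite H col0_A ?mulr0.
rewrite [\sum_(k <- iota 1 h) _]big1_seq; last first.
  by move=> k /andP[_]; rewrite mem_iota add1n ltnS => hk; rewrite H col0_B ?mulr0.
rewrite !fpdE mulr0 !addr0 divfK //; exact: c0_neq0.
Qed.

Lemma fpd_isFPdim : isFPdim R q (fun x => (fpd q x)%:R).
Proof.
split => //.
- move=> x; rewrite mem_basis ltr0n; case: x => //= *; lia.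
- exact: fpd_mul.
Qed.

Lemma fpd_unique f : isFPdim R q f -> forall x, x \in basis q -> f x = (fpd q x)%:R.
Proof.
case=> f1 fpos fmul.
have Hsum x y : x \in basis q -> y \in basis q ->
    f x * f y = \sum_(z <- basis q) (rule q x y z)%:R * f z.
  by move=> hx hy; rewrite fmul //; apply: eq_big_seq => z hz; rewrite fus_rule.
have XqB : Xq \in basis q by rewrite mem_basis.
set M := \sum_(c <- iota 1 h) f (Xm c).
set P := \sum_(c <- iota 1 (q - 2)./2) f (Xp c).
set a := f Xq.
have one1 : (1%:R : C) = 1 by [].
have e1 : a * a = 1 + M + a + P.
  rewrite Hsum // sum_basis /rule /rule0 /= one1 !mul1r f1.
  by congr (_ + _ + _ + _); apply: eq_bigr => c _; rewrite mul1r.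
have e2 c : (1 <= c <= h)%N -> f (Xm c) * a = M - f (Xm c) + a + P.
  move=> hc; have hcB : Xm c \in basis q by rewrite mem_basis.
  rewrite Hsum // sum_basis /rule /rule0 /= one1 mul0r add0r mul1r.
  have ci : c \in iota 1 h by rewrite mem_iota add1n ltnS.
  congr (_ + _ + _).
  + rewrite /M (bigD1_seq c) //= ?iota_uniq // eqxx mul0r add0r.
    rewrite [X in _ = X - _](bigD1_seq c) //= ?iota_uniq // addrC addrK.
    by apply: eq_bigr => i hi; rewrite eq_sym hi mul1r.
  + by apply: eq_bigr => i _; rewrite mul1r.
have e3 c : (1 <= c <= (q - 2)./2)%N -> a * f (Xp c) = M + a + (P + f (Xp c)).
  move=> hc; have hcB : Xp c \in basis q by rewrite mem_basis.
  rewrite Hsum // sum_basis /rule /rule0 /= one1 mul0r add0r mul1r.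
  have ci : c \in iota 1 (q - 2)./2 by rewrite mem_iota add1n ltnS.
  congr (_ + _ + _).
  + by apply: eq_bigr => i _; rewrite mul1r.
  + under eq_bigr do rewrite natrD mulrDl one1 mul1r.
    rewrite big_split /=; congr (_ + _).
    rewrite (bigD1_seq c) //= ?iota_uniq // eqxx one1 mul1r big1 ?addr0 //.
    by move=> i hi; rewrite eq_sym (negbTE hi) mul0r.
have a0 : 0 < a by apply: fpos.
have a1 : a + 1 != 0 by rewrite gt_eqF // ltr_wpDr // ler01.
have fm c : (1 <= c <= h)%N -> f (Xm c) = a - 1.
  move=> hc; apply: (mulIf a1).
  have := e2 c hc; move: e1; set u := f (Xm c) => E1 E2.
  have -> : (a - 1) * (a + 1) = a * a - 1 by ring.
  rewrite E1; rewrite mulrDr mulr1 E2; ring.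
have h1' : (1 <= 1 <= h)%N by rewrite leqnn h1.
have am1 : a - 1 != 0.
  by rewrite -(fm 1%N h1') gt_eqF // fpos // mem_basis.
have fp c : (1 <= c <= (q - 2)./2)%N -> f (Xp c) = a + 1.
  move=> hc; apply: (mulIf am1).
  have := e3 c hc; move: e1; set u := f (Xp c) => E1 E3.
  have -> : (a + 1) * (a - 1) = a * a - 1 by ring.
  rewrite E1 mulrBr mulr1 [u * a]mulrC E3; ring.
have eM : M = (a - 1) *+ h.
  rewrite /M (eq_big_seq (fun _ => a - 1)) ?sum_iota_const //.
  by move=> c; rewrite mem_iota add1n ltnS => hc; rewrite fm.
have eP : P = (a + 1) *+ (h - 1).
  rewrite /P (eq_big_seq (fun _ => a + 1)) ?sum_iota_const ?hqA //.
  by move=> c; rewrite mem_iota add1n ltnS -hqA => hc; rewrite fp.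
have aq : a = q%:R.
  have : a * (a - q%:R) = 0.
    rewrite mulrBr e1 eM eP mulrn_hm1 qR; ring.
  move/eqP; rewrite mulf_eq0 (gt_eqF a0) /= subr_eq0 => /eqP //.
have aq' : f Xq = q%:R := aq.
move=> x; rewrite mem_basis; case: x => [|c||c] /= hc.
- by rewrite f1.
- rewrite fm //; move: aq; rewrite /a => ->; by rewrite qm1R.
- by rewrite aq'.
- rewrite fp //; move: aq; rewrite /a => ->; by rewrite natr1.
Qed.

End Main.
End Z.

Theorem theorem4p3 (R : realType) (q : nat) (hq : (2 <= q)%N) (hev : ~~ odd q) :
  [/\ size (basis q) = q.+1,
      uniq (basis q),
      isFPdim R q (fun x => (fpd q x)%:R) /\
        (forall f, isFPdim R q f -> forall x, x \in basis q -> f x = (fpd q x)%:R),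
      (\sum_(x <- basis q) (fpd q x) ^ 2 = q * (q ^ 2 - 1))%N &
      (forall x y z, x \in basis q -> y \in basis q -> z \in basis q ->
         fusN R q x y z = (rule q x y z)%:R)].
Proof.
split.
- by apply: size_basis.
- by apply: uniq_basis.
- split; first by apply: fpd_isFPdim.
  by move=> f hf x hx; apply: (@fpd_unique R q hq hev f hf x hx).
- by apply: sum_fpd.
- by move=> x y z hx hy hz; apply: fus_rule.
Qed.
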